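(* Let $\ell\ge 2$ and let $G$ be an $N$-AW graph of order $n$. Then: (1) no connected component of $\overline{G}$ is a path $P_k$ with $k\equiv 3\pmod 4$; (2) at most one connected component of $\overline{G}$ is a path $P_k$ with $k\equiv 1\pmod 4$; (3) if $G$ is $(n,\ell)$-extremal, then no connected component of $\overline{G}$ is a path with more than $4$ vertices.
   Context: All graphs are finite and simple; $\overline{G}$ is the complement; $P_k$ is the path on $k$ vertices. Labels lie in $\mathbb{Z}_\ell$. In the neighborhood Lights Out game, toggling a vertex $w$ adds $1$ (mod $\ell$) to the label of each vertex of the closed neighborhood $N[w]$; the game is won when all labels are $0$; a graph is $N$-AW if every initial labeling can be won. $\max(n,\ell)$ is the maximum number of edges of an $N$-AW graph on $n$ vertices, and an $(n,\ell)$-extremal graph is an $N$-AW graph on $n$ vertices with $\max(n,\ell)$ edges. *)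

(* Defs.v *)
From mathcomp Require Import all_boot all_order all_algebra.
Set Implicit Arguments. Unset Strict Implicit. Unset Printing Implicit Defensive.
Import GRing.Theory.

Definition simple_graph (n : nat) (e : rel 'I_n) : Prop :=
  symmetric e /\ irreflexive e.

Definition compl_rel (n : nat) (e : rel 'I_n) : rel 'I_n :=
  fun u v => (u != v) && ~~ e u v.

Definition num_edges (n : nat) (e : rel 'I_n) : nat :=
  #|[set p : 'I_n * 'I_n | (p.1 < p.2)%N && e p.1 p.2]|.

Definition toggle (n l : nat) (e : rel 'I_n) (lab : {ffun 'I_n -> 'Z_l}) (w : 'I_n)
  : {ffun 'I_n -> 'Z_l} :=
  [ffun v => (lab v + (if (v == w) || e w v then 1 else 0))%R].

Definition winnable (n l : nat) (e : rel 'I_n) (lab : {ffun 'I_n -> 'Z_l}) : Prop :=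
  exists s : seq 'I_n, foldl (toggle e) lab s = [ffun _ => 0%R].
Arguments winnable {n l} e lab.

Definition N_AW (n l : nat) (e : rel 'I_n) : Prop :=
  forall lab : {ffun 'I_n -> 'Z_l}, winnable e lab.
Arguments N_AW {n} l e.

Definition extremal (n l : nat) (e : rel 'I_n) : Prop :=
  simple_graph e /\ N_AW l e /\
  forall e' : rel 'I_n, simple_graph e' -> N_AW l e' -> (num_edges e' <= num_edges e)%N.
Arguments extremal {n} l e.

(* C is (the vertex set of) a connected component of the graph [g] which,
   as an induced subgraph, is isomorphic to the path P_k. *)
Definition path_component (n : nat) (g : rel 'I_n) (C : {set 'I_n}) (k : nat) : Prop :=
  (0 < k)%N /\
  (exists f : 'I_k -> 'I_n,
      injective f /\ [set f i | i : 'I_k] = C /\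
      forall i j : 'I_k, g (f i) (f j) = ((i.+1 == j) || (j.+1 == i))) /\
  (forall u v, u \in C -> g u v -> v \in C).

(* Main.v *)
Require Import Defs.
From mathcomp Require Import all_boot all_order all_algebra.
From mathcomp Require Import zify ring.
Set Implicit Arguments. Unset Strict Implicit. Unset Printing Implicit Defensive.
Import GRing.Theory.
Local Open Scope ring_scope.

Definition adjN (n l : nat) (e : rel 'I_n) (v w : 'I_n) : 'Z_l :=
  if (v == w) || e w v then 1 else 0.

Definition Mx (n l : nat) (e : rel 'I_n) (x : {ffun 'I_n -> 'Z_l}) : {ffun 'I_n -> 'Z_l} :=
  [ffun v => \sum_w x w * adjN l e v w].

Definition cnt (n l : nat) (s : seq 'I_n) : {ffun 'I_n -> 'Z_l} :=
  [ffun w => (count_mem w s)%:R].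

Lemma Mx_add n l (e : rel 'I_n) (x y : {ffun 'I_n -> 'Z_l}) :
  Mx e (x + y) = Mx e x + Mx e y.
Proof.
apply/ffunP => v; rewrite !ffunE -big_split /=; apply: eq_bigr => w _.
by rewrite !ffunE mulrDl.
Qed.

Lemma Mx_opp n l (e : rel 'I_n) (x : {ffun 'I_n -> 'Z_l}) :
  Mx e (- x) = - Mx e x.
Proof.
apply/ffunP => v; rewrite !ffunE -sumrN; apply: eq_bigr => w _.
by rewrite !ffunE mulNr.
Qed.

Lemma Mx0 n l (e : rel 'I_n) : Mx e (0 : {ffun 'I_n -> 'Z_l}) = 0.
Proof. by apply/ffunP => v; rewrite !ffunE big1 // => w _; rewrite ffunE mul0r. Qed.

Lemma fold_toggle n l (e : rel 'I_n) (s : seq 'I_n) (lab : {ffun 'I_n -> 'Z_l}) :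
  foldl (toggle e) lab s = lab + Mx e (cnt l s).
Proof.
elim: s lab => [|w s IH] lab /=.
  have -> : cnt l [::] = 0 :> {ffun 'I_n -> 'Z_l}.
    by apply/ffunP => v; rewrite !ffunE.
  by rewrite Mx0 addr0.
rewrite IH.
have -> : cnt l (w :: s) = [ffun u => if u == w then 1 else 0] + cnt l s.
  apply/ffunP => u; rewrite !ffunE /= natrD; congr (_ + _).
  by rewrite eq_sym; case: (u == w).
rewrite Mx_add addrA; congr (_ + _).
apply/ffunP => v; rewrite !ffunE; congr (_ + _).
rewrite (bigD1 w) //= big1 ?addr0; last first.
  by move=> u /negbTE uw; rewrite ffunE uw mul0r.
by rewrite ffunE eqxx mul1r /adjN.
Qed.

Lemma cnt_surj n l (x : {ffun 'I_n -> 'Z_l}) : exists s, cnt l s = x.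
Proof.
exists (flatten [seq nseq (x w : nat) w | w <- enum 'I_n]).
apply/ffunP => v; rewrite ffunE count_flatten -map_comp.
rewrite sumnE big_map big_enum /=.
rewrite (bigD1 v) //= big1 ?addn0; last first.
  by move=> u uv; rewrite count_nseq /= (negbTE uv) mul0n.
rewrite count_nseq /= eqxx mul1n.
exact: natr_Zp.
Qed.

Lemma AW_inj n l (e : rel 'I_n) : N_AW l e ->
  forall y : {ffun 'I_n -> 'Z_l}, Mx e y = 0 -> y = 0.
Proof.
move=> AW.
have surj : forall b : {ffun 'I_n -> 'Z_l}, exists x, Mx e x == b.
  move=> b; have [s Hs] := AW (- b).
  exists (cnt l s); rewrite fold_toggle in Hs.
  apply/eqP; apply: (@addrI _ (- b)); rewrite Hs.
  by apply/ffunP => v; rewrite !ffunE addNr.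
pose g (b : {ffun 'I_n -> 'Z_l}) : {ffun 'I_n -> 'Z_l} := odflt 0 [pick x | Mx e x == b].
have gK : cancel g (Mx e).
  move=> b; rewrite /g; case: pickP => [x /eqP //|H].
  by have [x Hx] := surj b; rewrite H in Hx.
have [h gh hg] := injF_bij (can_inj gK).
have Mxh : Mx e =1 h by move=> b; rewrite -{1}(hg b) gK.
move=> y Hy.
have : h y = h 0 by rewrite -!Mxh Hy Mx0.
by move/(congr1 g); rewrite !hg.
Qed.

Lemma inj_AW n l (e : rel 'I_n) :
  (forall y : {ffun 'I_n -> 'Z_l}, Mx e y = 0 -> y = 0) -> N_AW l e.
Proof.
move=> H.
have inj : injective (@Mx n l e).
  move=> x y Hxy; apply/subr0_eq/H.
  by rewrite Mx_add Mx_opp Hxy subrr.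
have [h hK Kh] := injF_bij inj.
move=> lab; have [s Hs] := cnt_surj (h (- lab)).
exists s; rewrite fold_toggle Hs Kh.
by rewrite subrr.
Qed.

Lemma adjN_compl n l (e : rel 'I_n) v w :
  adjN l e v w = if compl_rel e w v then 0 else 1.
Proof.
rewrite /adjN /compl_rel eq_sym.
by case: (w == v); case: (e w v).
Qed.

Lemma Mx_compl n l (e : rel 'I_n) (x : {ffun 'I_n -> 'Z_l}) v :
  Mx e x v = \sum_w x w - \sum_w x w * (if compl_rel e w v then 1 else 0).
Proof.
rewrite ffunE -sumrB; apply: eq_bigr => w _; rewrite adjN_compl.
by case: (compl_rel e w v); rewrite ?mulr0 ?mulr1 ?subr0 ?subrr.
Qed.

Definition pat (l i : nat) : 'Z_l :=
  if (i %% 4 == 0)%N then 1 else if (i %% 4 == 2)%N then -1 else 0.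

Definition pv n l k (f : 'I_k -> 'I_n) : {ffun 'I_n -> 'Z_l} :=
  [ffun v => \sum_(i < k | f i == v) pat l i].

Lemma sum_pv n l k (f : 'I_k -> 'I_n) (F : 'I_n -> 'Z_l) :
  \sum_w pv l f w * F w = \sum_(i < k) pat l i * F (f i).
Proof.
under eq_bigr do rewrite ffunE mulr_suml.
rewrite (exchange_big_dep predT) //=; apply: eq_bigr => i _.
by rewrite (big_pred1 (f i)) // => w /=; rewrite eq_sym.
Qed.

Lemma pv_f n l k (f : 'I_k -> 'I_n) j : injective f -> pv l f (f j) = pat l j.
Proof.
move=> inj; rewrite ffunE (big_pred1 j) // => i /=.
by rewrite (inj_eq inj).
Qed.

Lemma sum_single l k c (F : nat -> 'Z_l) :
  \sum_(i < k) (if (i : nat) == c then F (i : nat) else 0) = if (c < k)%N then F c else 0.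
Proof.
case: ltnP => ck.
  rewrite (bigD1 (Ordinal ck)) //= eqxx big1 ?addr0 // => i ic.
  have -> : ((i : nat) == c) = false.
    by apply/negbTE; apply: contra ic => /eqP ic; apply/eqP/val_inj.
  by [].
rewrite big1 // => i _.
have -> : ((i : nat) == c) = false.
  by apply/negbTE; rewrite neq_ltn (leq_trans (ltn_ord i) ck).
by [].
Qed.

Lemma nb_zero l k j : (k %% 2 = 1)%N -> (j < k)%N ->
  \sum_(i < k) pat l i * (if ((i : nat).+1 == j) || (j.+1 == i) then 1 else 0) = 0.
Proof.
move=> ko jk.
have -> : \sum_(i < k) pat l i * (if ((i : nat).+1 == j) || (j.+1 == i) then 1 else 0)
   = \sum_(i < k) (if (i : nat).+1 == j then pat l i else 0)
   + \sum_(i < k) (if (i : nat) == j.+1 then pat l i else 0).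
  rewrite -big_split; apply: eq_bigr => i _ /=.
  rewrite [j.+1 == _]eq_sym.
  case: eqP => [h1|_]; case: eqP => [h2|_] //=; rewrite ?mulr1 ?mulr0 ?addr0 ?add0r //.
  lia.
rewrite sum_single.
case: j jk => [|j] jk.
  rewrite big1 ?add0r; last by move=> i _.
  by case: ifP => // _; rewrite /pat.
have -> : \sum_(i < k) (if (i : nat).+1 == j.+1 then pat l i else 0)
          = \sum_(i < k) (if (i : nat) == j then pat l i else 0) by [].
rewrite sum_single.
rewrite (ltn_trans (ltnSn j) jk).
have : (j %% 4 = 0 \/ j %% 4 = 1 \/ j %% 4 = 2 \/ j %% 4 = 3)%N by lia.
case=> [h|[h|[h|h]]].
- have -> : (j.+2 < k)%N by lia.
  have h2 : (j.+2 %% 4 = 2)%N by lia.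
  by rewrite /pat h h2 /= addrN.
- have h2 : (j.+2 %% 4 = 3)%N by lia.
  by rewrite /pat h h2 /=; case: ifP; rewrite addr0.
- have -> : (j.+2 < k)%N by lia.
  have h2 : (j.+2 %% 4 = 0)%N by lia.
  by rewrite /pat h h2 /= addNr.
- have h2 : (j.+2 %% 4 = 1)%N by lia.
  by rewrite /pat h h2 /=; case: ifP; rewrite addr0.
Qed.

Lemma sum_pat4 l m : \sum_(0 <= i < 4 * m) pat l i = 0.
Proof.
elim: m => [|m IH]; first by rewrite big_geq.
have -> : (4 * m.+1 = (4 * m).+4)%N by lia.
rewrite !big_nat_recr //= IH add0r.
have h0 : ((4 * m) %% 4 = 0)%N by lia.
have h1 : ((4 * m).+1 %% 4 = 1)%N by lia.
have h2 : ((4 * m).+2 %% 4 = 2)%N by lia.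
have h3 : ((4 * m).+3 %% 4 = 3)%N by lia.
  by rewrite /pat h0 h1 h2 h3 /= !addr0 subrr.
Qed.

Lemma sum_pat l k : (k %% 2 = 1)%N ->
  \sum_(i < k) pat l i = if (k %% 4 == 3)%N then 0 else 1.
Proof.
move=> ko.
rewrite -(big_mkord xpredT).
have [m [r [Hk hr]]] : exists m r, k = (4 * m + r)%N /\ (r < 4)%N.
  by exists (k %/ 4)%N, (k %% 4)%N; split; lia.
subst k.
have hm : ((4 * m + r) %% 4 = r)%N by lia.
rewrite hm.
case: r hr hm ko => [|[|[|[|r]]]] hr hm ko //=; try lia.
- rewrite addn1 big_nat_recr /= ?sum_pat4 ?add0r; last by lia.
  have h0 : ((4 * m) %% 4 = 0)%N by lia.
  by rewrite /pat h0.
- rewrite addn3 !big_nat_recr /= ?sum_pat4 ?add0r; try lia.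
  have h0 : ((4 * m) %% 4 = 0)%N by lia.
  have h1 : ((4 * m).+1 %% 4 = 1)%N by lia.
  have h2 : ((4 * m).+2 %% 4 = 2)%N by lia.
  by rewrite /pat h0 h1 h2 /= !addr0 subrr.
Qed.

Lemma Mx_pv n l (e : rel 'I_n) k (f : 'I_k -> 'I_n) C :
  injective f -> [set f i | i : 'I_k] = C ->
  (forall i j, compl_rel e (f i) (f j) = ((i.+1 == j) || (j.+1 == i))) ->
  (forall u v, u \in C -> compl_rel e u v -> v \in C) ->
  (k %% 2 = 1)%N -> forall v, Mx e (pv l f) v = \sum_(i<k) pat l i.
Proof.
move=> inj fC adj cl ko v.
have s1 : \sum_w pv l f w = \sum_(i<k) pat l i.
  rewrite -(eq_bigr _ (fun w _ => mulr1 (pv l f w))) sum_pv.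
  by apply: eq_bigr => i _; rewrite mulr1.
rewrite Mx_compl s1 sum_pv.
have -> : \sum_(i < k) pat l i * (if compl_rel e (f i) v then 1 else 0) = 0.
  case vC: (v \in C).
    move: vC; rewrite -fC => /imsetP [j _ ->].
    under eq_bigr do rewrite adj.
    exact: nb_zero.
  rewrite big1 // => i _.
  case h: (compl_rel e (f i) v); last by rewrite mulr0.
  have : v \in C by apply: (cl (f i)) => //; rewrite -fC imset_f.
  by rewrite vC.
by rewrite subr0.
Qed.

Lemma comp_sub n (g : rel 'I_n) (C1 C2 : {set 'I_n}) k1 (f : 'I_k1 -> 'I_n) :
  [set f i | i : 'I_k1] = C1 -> (forall i j, g (f i) (f j) = ((i.+1 == j) || (j.+1 == i))) ->
  (forall u v, u \in C2 -> g u v -> v \in C2) -> forall i0, f i0 \in C2 -> C1 \subset C2.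
Proof.
move=> fC adj cl i0 h0.
have step : forall d (i j : 'I_k1), f i \in C2 -> ((j : nat) = i + d \/ (i : nat) = j + d)%N -> f j \in C2.
  elim=> [|d IH] i j hi.
    by rewrite !addn0 => -[] h; have -> : j = i by apply: val_inj.
  case=> h.
    have lt : (j.-1 < k1)%N by have := ltn_ord j; lia.
    apply: (cl (f (Ordinal lt))); first by apply: (IH i) => //; left => /=; lia.
    by rewrite adj /=; apply/orP; left; apply/eqP; lia.
  have lt : (j.+1 < k1)%N by have := ltn_ord i; lia.
  apply: (cl (f (Ordinal lt))); first by apply: (IH i) => //; right => /=; lia.
  by rewrite adj /=; apply/orP; right; apply/eqP.
apply/subsetP => w; rewrite -fC => /imsetP [j _ ->].
case: (leqP i0 j) => hij.
  by apply: (step (j - i0)%N i0) => //; left; lia.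
by apply: (step (i0 - j)%N i0) => //; right; lia.
Qed.

Lemma part1 l n (e : rel 'I_n) : N_AW l e ->
  forall C k, path_component (compl_rel e) C k -> (k %% 4 <> 3)%N.
Proof.
move=> AW C k [kpos [[f [inj [fC adj]]] cl]] hk.
have ko : (k %% 2 = 1)%N by lia.
have M0 : Mx e (pv l f) = 0.
  by apply/ffunP => v; rewrite (Mx_pv l inj fC adj cl ko) sum_pat // hk /= ffunE.
move: (congr1 (fun y : {ffun 'I_n -> 'Z_l} => y (f (Ordinal kpos))) (AW_inj AW M0)).
by rewrite pv_f // ffunE /pat /= => /eqP; rewrite oner_eq0.
Qed.

Lemma part2 l n (e : rel 'I_n) : N_AW l e ->
      (forall C1 C2 k1 k2,
          path_component (compl_rel e) C1 k1 -> path_component (compl_rel e) C2 k2 ->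
          (k1 %% 4 = 1)%N -> (k2 %% 4 = 1)%N -> C1 = C2).
Proof.
move=> AW C1 C2 k1 k2 [k1pos [[f1 [inj1 [fC1 adj1]]] cl1]]
  [k2pos [[f2 [inj2 [fC2 adj2]]] cl2]] h1 h2.
case: (C1 =P C2) => // neq; exfalso.
set o := Ordinal k1pos.
have notin : f1 o \notin C2.
  apply/negP => hin; apply: neq; apply/eqP; rewrite eqEsubset; apply/andP; split.
    exact: (comp_sub fC1 adj1 cl2 hin).
  move: (hin); rewrite -fC2 => /imsetP [i2 _ e2].
  rewrite fC2; apply: (comp_sub fC2 adj2 cl1 (i0 := i2)).
  by rewrite -e2 -fC1 imset_f.
have ko1 : (k1 %% 2 = 1)%N by lia.
have ko2 : (k2 %% 2 = 1)%N by lia.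
have M0 : Mx e (pv l f1 - pv l f2) = 0.
  rewrite Mx_add Mx_opp; apply/ffunP => v.
  have E1 := Mx_pv l inj1 fC1 adj1 cl1 ko1 v; have E2 := Mx_pv l inj2 fC2 adj2 cl2 ko2 v.
  rewrite ffunE in E1; rewrite ffunE in E2; rewrite !ffunE E1 E2.
  by rewrite !sum_pat // h1 h2 /= subrr.
have pv2 : pv l f2 (f1 o) = 0.
  rewrite ffunE big_pred0 // => i; apply/negP => /eqP ei.
  by move: notin; rewrite -ei -fC2 imset_f.
move: (congr1 (fun y : {ffun 'I_n -> 'Z_l} => y (f1 o)) (AW_inj AW M0)).
have P1 : pv l f1 (f1 o) = 1 by rewrite pv_f.
rewrite ffunE in P1; rewrite ffunE in pv2.
by rewrite !ffunE P1 pv2 subr0 => /eqP; rewrite oner_eq0.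
Qed.

Lemma sum_ifeq n l (F : 'I_n -> 'Z_l) x :
  \sum_w F w * (if w == x then 1 else 0) = F x.
Proof.
rewrite (bigD1 x) //= eqxx mulr1 big1 ?addr0 // => w /negbTE ->.
by rewrite mulr0.
Qed.

Lemma sum_ifeq2 n l (G : 'I_n -> 'Z_l) x c :
  \sum_w (if w == x then c else 0) * G w = c * G x.
Proof.
rewrite (bigD1 x) //= eqxx big1 ?addr0 // => w /negbTE ->.
by rewrite mul0r.
Qed.

Lemma part3 l n (e : rel 'I_n) : simple_graph e -> extremal l e ->
  forall C k, path_component (compl_rel e) C k -> (k <= 4)%N.
Proof.
move=> [sym irr] [_ [AW ext]] C k [kpos [[f [inj [fC adj]]] cl]].
rewrite leqNgt; apply/negP => k5.
have gsym : forall u v, compl_rel e u v = compl_rel e v u.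
  by move=> u v; rewrite /compl_rel eq_sym sym.
have h0 : (0 < k)%N by lia.
have h1 : (1 < k)%N by lia.
have h2 : (2 < k)%N by lia.
have h3 : (3 < k)%N by lia.
have h4 : (4 < k)%N by lia.
pose f0 := f (Ordinal h0). pose f1 := f (Ordinal h1). pose f2 := f (Ordinal h2).
pose a := f (Ordinal h3). pose b := f (Ordinal h4).
have fneq : forall i j (hi : (i < k)%N) (hj : (j < k)%N), i != j -> f (Ordinal hi) != f (Ordinal hj).
  by move=> i j hi hj ij; rewrite (inj_eq inj).
have inC : forall i, f i \in C by move=> i; rewrite -fC imset_f.
have nb0 : forall w, compl_rel e w f0 = (w == f1).
  move=> w; apply/idP/idP => [h|/eqP ->]; last by rewrite adj.
  have : w \in C by apply: (cl f0); [exact: inC | rewrite gsym].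
  rewrite -fC => /imsetP [i _ wi]; move: h; rewrite wi adj /= => h.
  rewrite (inj_eq inj); apply/eqP/val_inj => /=; lia.
have nb2 : forall w, compl_rel e w f2 = (w == f1) || (w == a).
  move=> w; apply/idP/idP => [h|/orP [] /eqP ->]; try by rewrite adj.
  have : w \in C by apply: (cl f2); [exact: inC | rewrite gsym].
  rewrite -fC => /imsetP [i _ wi]; move: h; rewrite wi adj /= => h.
  rewrite !(inj_eq inj); apply/orP.
  have : (i : nat) = 1%N \/ (i : nat) = 3%N by lia.
  by case=> hi; [left | right]; apply/eqP/val_inj.
have gab : compl_rel e a b by rewrite adj.
have eab : e a b = false by move: gab; rewrite /compl_rel => /andP [_ /negbTE].
have eba : e b a = false by rewrite sym.
have ab : a != b by apply: fneq.
pose e' : rel 'I_n := fun u v => e u v || ((u == a) && (v == b)) || ((u == b) && (v == a)).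
have sg' : simple_graph e'.
  split.
    move=> u v; rewrite /e' sym; case: (v == a); case: (v == b); case: (u == a); case: (u == b);
      by rewrite /= ?orbT ?orbF.
  move=> u; rewrite /e' irr /=; apply/negP => /orP [] /andP [/eqP q1 /eqP q2];
    by move: ab; rewrite -q1 -q2 eqxx.
have compl' : forall w v, v != a -> v != b -> compl_rel e' w v = compl_rel e w v.
  by move=> w v va vb; rewrite /compl_rel /e' (negbTE va) (negbTE vb) !andbF !orbF.
have Mx' : forall (z : {ffun 'I_n -> 'Z_l}) v,
    Mx e' z v = Mx e z v + (if v == b then z a else 0) + (if v == a then z b else 0).
  move=> z v; rewrite !ffunE.
  have Hadj : forall w, adjN l e' v w = adjN l e v w + (if (w == a) && (v == b) then 1 else 0)
                                     + (if (w == b) && (v == a) then 1 else 0).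
    move=> w; rewrite /adjN /e'.
    case P1: ((w == a) && (v == b)).
      move/andP: P1 => [/eqP -> /eqP ->].
      by rewrite eab (eq_sym b a) (negbTE ab) /= add0r addr0.
    case P2: ((w == b) && (v == a)).
      move/andP: P2 => [/eqP -> /eqP ->].
      by rewrite eba (negbTE ab) /= !add0r.
    by rewrite /= !orbF !addr0.
  under eq_bigr do rewrite Hadj !mulrDr.
  rewrite !big_split /=; congr (_ + _ + _).
    case: (v =P b) => [_|_]; last by rewrite big1 // => w _; rewrite andbF mulr0.
    by under eq_bigr do rewrite andbT; rewrite sum_ifeq.
  case: (v =P a) => [_|_]; last by rewrite big1 // => w _; rewrite andbF mulr0.
  by under eq_bigr do rewrite andbT; rewrite sum_ifeq.
have f0a : f0 != a by apply: fneq.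
have f0b : f0 != b by apply: fneq.
have f2a : f2 != a by apply: fneq.
have f2b : f2 != b by apply: fneq.
have f1a : f1 != a by apply: fneq.
have f1b : f1 != b by apply: fneq.
have AW' : N_AW l e'.
  apply: inj_AW => y' Hy'.
  have H0 : Mx e' y' f0 = 0 by rewrite Hy' ffunE.
  have H2 : Mx e' y' f2 = 0 by rewrite Hy' ffunE.
  rewrite !Mx_compl in H0 H2.
  have S0 : \sum_w y' w * (if compl_rel e' w f0 then 1 else 0) = y' f1.
    by rewrite -(sum_ifeq y' f1); apply: eq_bigr => w _; rewrite compl' // nb0.
  rewrite S0 in H0.
  have ya : y' a = 0.
    have E : \sum_w y' w * (if (w == f1) || (w == a) then 1 else 0) = y' f1 + y' a.
      rewrite -(sum_ifeq y' f1) -(sum_ifeq y' a) -big_split /=.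
      apply: eq_bigr => w _; rewrite -mulrDr.
      case: (w =P f1) => [->|]; first by rewrite (negbTE f1a) addr0.
      by move=> _; rewrite add0r.
    have S2 : \sum_w y' w * (if compl_rel e' w f2 then 1 else 0) = y' f1 + y' a.
      by rewrite -E; apply: eq_bigr => w _; rewrite compl' // nb2.
    rewrite S2 in H2.
    have -> : y' a = (\sum_w y' w - y' f1) - (\sum_w y' w - (y' f1 + y' a)) by ring.
    by rewrite H0 H2 subrr.
  set c := y' b.
  pose y : {ffun 'I_n -> 'Z_l} :=
    [ffun w => y' w + (if w == f0 then c else 0) - (if w == f2 then c else 0)].
  have My : Mx e y = 0.
    apply/ffunP => v.
    have Ev := Mx' y' v; rewrite Hy' ya in Ev.
    have Ev' : Mx e y' v = - (if v == a then c else 0).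
      rewrite ffunE if_same addr0 in Ev.
      by rewrite /c; apply/eqP; rewrite -addr_eq0 -Ev.
    rewrite ffunE in Ev'.
    rewrite !ffunE.
    under eq_bigr do rewrite ffunE mulrBl mulrDl.
    rewrite sumrB big_split /= Ev' !sum_ifeq2 !adjN_compl.
    rewrite [compl_rel e f0 v]gsym [compl_rel e f2 v]gsym nb0 nb2.
    case: (v =P f1) => [vf1|_] /=.
      by rewrite vf1 (negbTE f1a) oppr0 add0r mulr0 subrr.
    case: (v =P a) => [_|_] /=; last by rewrite oppr0 add0r subrr.
    by rewrite mulr0 mulr1 subr0 addNr.
  have y0 := AW_inj AW My.
  have c0 : c = 0.
    move: (congr1 (fun z : {ffun 'I_n -> 'Z_l} => z b) y0); rewrite !ffunE.
    by rewrite [b == f0]eq_sym [b == f2]eq_sym (negbTE f0b) (negbTE f2b) addr0 subr0.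
  apply/ffunP => w.
  move: (congr1 (fun z : {ffun 'I_n -> 'Z_l} => z w) y0); rewrite !ffunE.
  by rewrite c0 !if_same addr0 subr0.
have := ext e' sg' AW'.
apply/negP; rewrite -ltnNge.
rewrite /num_edges; apply: proper_card; apply/properP; split.
  apply/subsetP => p; rewrite !inE => /andP [-> ep] /=.
  by rewrite /e' ep.
have : ((a : nat) < b)%N || ((b : nat) < a)%N.
  by rewrite -neq_ltn; apply: contra ab => /eqP h; apply/eqP/val_inj.
case/orP => hab.
  exists (a, b); rewrite !inE /= hab /=; first by rewrite /e' !eqxx orbT.
  by rewrite eab.
exists (b, a); rewrite !inE /= hab /=; first by rewrite /e' !eqxx !orbT.
by rewrite eba.
Qed.

Local Close Scope ring_scope.

Theorem corollary3p2 (l n : nat) (e : rel 'I_n) :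
  (2 <= l)%N -> simple_graph e -> N_AW l e ->
  [/\ (forall C k, path_component (compl_rel e) C k -> k %% 4 <> 3),
      (forall C1 C2 k1 k2,
          path_component (compl_rel e) C1 k1 -> path_component (compl_rel e) C2 k2 ->
          k1 %% 4 = 1 -> k2 %% 4 = 1 -> C1 = C2)
    & (extremal l e -> forall C k, path_component (compl_rel e) C k -> (k <= 4)%N)].
Proof.
move=> _ sg AW; split.
- exact: part1 AW.
- exact: part2 AW.
- by move=> ext; apply: (part3 sg ext).
Qed.
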